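(* On the region $\{(t,x^1,x^2,x^3)\}\subset\mathbb R^4$ consider the de Sitter metric $ds^2=-dt^2+e^{lt}\delta_{ij}dx^idx^j$ ($l\neq0$ constant, $i,j=1,2,3$) and the symmetric tensor $K$ with components $K_{ij}=e^{2lt}\delta_{ij}$, $K_{tt}=K_{ti}=0$. For a constant $c\ge0$ let $\phi(t)=e^{lt/2}(1+ce^{lt})^{-1/2}$ and $\psi(t)=e^{-lt/2}(1+ce^{lt})^{1/2}$, and define the vector fields $$\Upsilon_0=\phi(t)\,\partial_t,\qquad \Upsilon_i=\phi(t)\,x^i\,\partial_t-\tfrac{2}{l}\psi(t)\,\partial_i\quad(i=1,2,3).$$ Then $\mathcal L_{\Upsilon_0}g=2\Omega_0\,(g+cK)$ and $\mathcal L_{\Upsilon_i}g=2x^i\Omega_0\,(g+cK)$ with $\Omega_0=\tfrac{l}{2}e^{lt/2}(1+ce^{lt})^{-3/2}$. For $c=0$ these reduce to proper conformal Killing vectors of $g$. Consequently, for the geodesic Lagrangian $L=\frac{1}{2n}\left[-\dot t^2+e^{lt}\delta_{ij}\dot x^i\dot x^j\right]-\frac{m^2}{2}n$, along any solution of its Euler–Lagrange equations on which $\kappa:=K^{\mu\nu}p_\mu p_\nu=p_1^2+p_2^2+p_3^2\neq0$, the quantities $\Upsilon_0^\mu p_\mu$ and $\Upsilon_i^\mu p_\mu$ with $c=m^2/\kappa$ are constant.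
   Context: $n(\lambda)>0$ is the einbein, dots denote $d/d\lambda$, $p_\mu=\partial L/\partial\dot{\mathrm x}^\mu$, $K^{\mu\nu}$ is $K$ with indices raised by $g$ (so $K=\sum_i\partial_i\otimes\partial_i$ with indices lowered, a Killing tensor built from spatial translations). *)

(* Defs.v *)
From Stdlib Require Import Reals Arith Bool.
From Coquelicot Require Import Coquelicot.
Open Scope bool_scope.
Open Scope R_scope.

(* A point of R^4 in coordinates (x^0, x^1, x^2, x^3) = (t, x^1, x^2, x^3);
   indices >= 4 are irrelevant. *)
Definition pt := nat -> R.
Definition tensor := pt -> nat -> nat -> R.   (* components T_{mu nu} *)
Definition vfield := pt -> nat -> R.          (* components V^mu *)

Definition upd (p : pt) (mu : nat) (s : R) : pt :=
  fun k => if Nat.eqb k mu then s else p k.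

Definition pd (f : pt -> R) (mu : nat) (p : pt) : R :=
  Derive (fun s => f (upd p mu s)) (p mu).

Definition sum4 (f : nat -> R) : R := f 0%nat + f 1%nat + f 2%nat + f 3%nat.

Definition lie (V : vfield) (T : tensor) (p : pt) (mu nu : nat) : R :=
  sum4 (fun r => V p r * pd (fun y => T y mu nu) r p)
  + sum4 (fun r => T p r nu * pd (fun y => V y r) mu p)
  + sum4 (fun r => T p mu r * pd (fun y => V y r) nu p).

Definition spatial_diag (mu nu : nat) : bool :=
  Nat.eqb mu nu && Nat.leb 1 mu && Nat.leb mu 3.

Definition gdS (l : R) : tensor := fun p mu nu =>
  if Nat.eqb mu 0 && Nat.eqb nu 0 then -1
  else if spatial_diag mu nu then exp (l * p 0%nat) else 0.

Definition ginv (l : R) : tensor := fun p mu nu =>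
  if Nat.eqb mu 0 && Nat.eqb nu 0 then -1
  else if spatial_diag mu nu then exp (- (l * p 0%nat)) else 0.

Definition Kt (l : R) : tensor := fun p mu nu =>
  if spatial_diag mu nu then exp (2 * l * p 0%nat) else 0.

Definition Kup (l : R) : tensor := fun p mu nu =>
  sum4 (fun a => sum4 (fun b => ginv l p mu a * ginv l p nu b * Kt l p a b)).

Definition phi (l c t : R) : R := exp (l * t / 2) / sqrt (1 + c * exp (l * t)).
Definition psi (l c t : R) : R := exp (- (l * t) / 2) * sqrt (1 + c * exp (l * t)).
Definition Omega0 (l c t : R) : R :=
  l / 2 * exp (l * t / 2) / (sqrt (1 + c * exp (l * t))) ^ 3.

Definition Ups0 (l c : R) : vfield := fun p k =>
  if Nat.eqb k 0 then phi l c (p 0%nat) else 0.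

Definition Upsi (l c : R) (i : nat) : vfield := fun p k =>
  if Nat.eqb k 0 then phi l c (p 0%nat) * p i
  else if Nat.eqb k i then - (2 / l) * psi l c (p 0%nat) else 0.

Definition is_proper_CKV (V : vfield) (g : tensor) : Prop :=
  exists sigma : pt -> R,
    (forall p mu nu, (mu <= 3)%nat -> (nu <= 3)%nat ->
       lie V g p mu nu = 2 * sigma p * g p mu nu)
    /\ exists p1 p2, sigma p1 <> sigma p2.

Definition Lag (l m nv : R) (q v : pt) : R :=
  / (2 * nv) * (- (v 0%nat) ^ 2
                + exp (l * q 0%nat) * ((v 1%nat) ^ 2 + (v 2%nat) ^ 2 + (v 3%nat) ^ 2))
  - m ^ 2 / 2 * nv.

Definition dLdv (l m nv : R) (q v : pt) (mu : nat) : R :=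
  Derive (fun s => Lag l m nv q (upd v mu s)) (v mu).
Definition dLdq (l m nv : R) (q v : pt) (mu : nat) : R :=
  Derive (fun s => Lag l m nv (upd q mu s) v) (q mu).
Definition dLdn (l m nv : R) (q v : pt) : R :=
  Derive (fun s => Lag l m s q v) nv.

Definition vel (q : R -> pt) (mu : nat) (lam : R) : R := Derive (fun s => q s mu) lam.

Definition mom (l m : R) (n : R -> R) (q : R -> pt) (mu : nat) (lam : R) : R :=
  dLdv l m (n lam) (q lam) (fun k => vel q k lam) mu.

Definition in_interval (a b : Rbar) (lam : R) : Prop := Rbar_lt a lam /\ Rbar_lt lam b.

Definition is_EL_solution (l m : R) (I : R -> Prop) (n : R -> R) (q : R -> pt) : Prop :=
  forall lam, I lam ->
    0 < n lam
    /\ (forall mu, (mu <= 3)%nat -> ex_derive (fun s => q s mu) lam)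
    /\ (forall mu, (mu <= 3)%nat ->
          is_derive (mom l m n q mu) lam
                    (dLdq l m (n lam) (q lam) (fun k => vel q k lam) mu))
    /\ dLdn l m (n lam) (q lam) (fun k => vel q k lam) = 0.

Definition kappa (l m : R) (n : R -> R) (q : R -> pt) (lam : R) : R :=
  sum4 (fun mu => sum4 (fun nu =>
    Kup l (q lam) mu nu * mom l m n q mu lam * mom l m n q nu lam)).

Definition contr (V : vfield) (l m : R) (n : R -> R) (q : R -> pt) (lam : R) : R :=
  sum4 (fun mu => V (q lam) mu * mom l m n q mu lam).

(* Main.v *)
Require Import Defs.
From Stdlib Require Import Reals Arith Lra Lia.
From Coquelicot Require Import Coquelicot.
Open Scope R_scope.


Lemma pos1 l c t : 0 <= c -> 0 < 1 + c * exp (l * t).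
Proof. intros; pose proof (exp_pos (l*t)); nra. Qed.

Lemma Sne l c t : 0 <= c -> sqrt (1 + c * exp (l * t)) <> 0.
Proof. intros; apply Rgt_not_eq, sqrt_lt_R0, pos1; auto. Qed.

Lemma SS l c t : 0 <= c -> sqrt (1 + c * exp (l * t)) * sqrt (1 + c * exp (l * t)) = 1 + c * exp (l * t).
Proof. intros; apply sqrt_sqrt; left; apply pos1; auto. Qed.

Lemma Dphi l c t : 0 <= c -> is_derive (phi l c) t (Omega0 l c t).
Proof.
  intros Hc. unfold phi, Omega0.
  pose proof (pos1 l c t Hc). pose proof (Sne l c t Hc). pose proof (SS l c t Hc).
  auto_derive. { split; auto. }
  set (S := sqrt (1 + c * exp (l * t))) in *.
  transitivity (l/2 * exp (l*t/2) / S^3 * (S*S - c * exp (l*t))).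
  { unfold Rdiv; field; auto. }
  rewrite H1; field; auto.
Qed.

Lemma Dpsi l c t : 0 <= c -> is_derive (psi l c) t (-(l/2) * exp (-(l*t)/2) / sqrt (1 + c * exp (l * t))).
Proof.
  intros Hc. unfold psi.
  pose proof (pos1 l c t Hc). pose proof (Sne l c t Hc). pose proof (SS l c t Hc).
  auto_derive. { auto. }
  set (S := sqrt (1 + c * exp (l * t))) in *.
  transitivity (l/2 * exp (-(l*t)/2) / S * (- (S*S) + c * exp (l*t))).
  { unfold Rdiv; field; auto. }
  rewrite H1; field; auto.
Qed.

Lemma Eg l t : exp (l*t) * exp (-(l*t)/2) = exp (l*t/2).
Proof. rewrite <- exp_plus; f_equal; field. Qed.

Lemma psi_val l c t : l <> 0 -> 0 <= c ->
  -(l/2) * exp (-(l*t)/2) / sqrt (1 + c * exp (l * t)) = -(l/2) * phi l c t / exp (l*t).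
Proof.
  intros Hl Hc. unfold phi. rewrite <- (Eg l t).
  pose proof (Sne l c t Hc). pose proof (exp_pos (l*t)). field; split; lra || auto.
Qed.

Lemma Omega0_alt l c t : 0 <= c ->
  Omega0 l c t = l * phi l c t * exp (l*t) / (2 * (exp (l*t) + c * (exp (l*t) * exp (l*t)))).
Proof.
  intros Hc. unfold Omega0, phi.
  pose proof (Sne l c t Hc). pose proof (SS l c t Hc). pose proof (exp_pos (l*t)).
  replace (exp (l*t) + c * (exp (l*t) * exp (l*t))) with
     (exp (l*t) * (sqrt (1 + c * exp (l * t)) * sqrt (1 + c * exp (l * t)))) by (rewrite H0; ring).
  field; split; auto; lra.
Qed.



Lemma D_exp l x : Derive (fun s => exp (l*s)) x = l * exp (l*x).
Proof. apply is_derive_unique; auto_derive; auto; ring. Qed.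
Lemma D_phi l c x : 0 <= c -> Derive (fun s => phi l c s) x = Omega0 l c x.
Proof. intros; apply is_derive_unique; apply Dphi; auto. Qed.
Lemma D_phim l c a x : 0 <= c -> Derive (fun s => phi l c s * a) x = Omega0 l c x * a.
Proof. intros; apply is_derive_unique.
  replace (Omega0 l c x * a) with (a * Omega0 l c x) by ring.
  apply (is_derive_ext (fun s => a * phi l c s)); [intro t; change (a * phi l c t = phi l c t * a); ring|].
  apply (is_derive_scal (phi l c) x a); apply Dphi; auto. Qed.
Lemma D_lin b x : Derive (fun s => b * s) x = b.
Proof. apply is_derive_unique; auto_derive; auto; ring. Qed.
Lemma D_psi l c x : l <> 0 -> 0 <= c ->
  Derive (fun s => - (2 / l) * psi l c s) x = - (2 / l) * (-(l/2) * phi l c x / exp (l*x)).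
Proof. intros; apply is_derive_unique.
  rewrite <- psi_val; auto.
  apply (is_derive_scal (psi l c) x (-(2/l))); apply Dpsi; auto. Qed.

Lemma exp2 l t : exp (2 * l * t) = exp (l*t) * exp (l*t).
Proof. rewrite <- exp_plus; f_equal; ring. Qed.

Ltac part1 l c :=
  cbv beta iota delta [lie sum4 pd upd gdS Kt Ups0 Upsi spatial_diag Nat.eqb Nat.leb andb];
  repeat rewrite Derive_const; repeat rewrite D_exp;
  repeat (rewrite D_phi by assumption); repeat (rewrite D_phim by assumption);
  repeat rewrite D_lin; repeat (rewrite D_psi by assumption);
  repeat rewrite exp2;
  repeat (rewrite (Omega0_alt l c) by assumption);
  try (match goal with |- context [exp (l * ?t)] =>
     let H1 := fresh in let H2 := fresh in let H3 := fresh in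
     pose proof (exp_pos (l*t)) as H1;
     assert (H2 : exp (l*t) + c * (exp (l*t) * exp (l*t)) <> 0) by
        (apply Rgt_not_eq; pose proof (pos1 l c t ltac:(assumption)); nra);
     assert (H3 : exp (l*t) <> 0) by lra;
     field; repeat split; auto end).

Lemma part1 l (Hl : l <> 0) c (Hc : 0 <= c) p mu nu : (mu <= 3)%nat -> (nu <= 3)%nat ->
       lie (Ups0 l c) (gdS l) p mu nu
         = 2 * Omega0 l c (p 0%nat) * (gdS l p mu nu + c * Kt l p mu nu)
       /\ (forall i : nat, (1 <= i <= 3)%nat ->
            lie (Upsi l c i) (gdS l) p mu nu
              = 2 * p i * Omega0 l c (p 0%nat) * (gdS l p mu nu + c * Kt l p mu nu)).
Proof.
  intros Hmu Hnu. split.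
  - destruct mu as [|[|[|[|]]]]; try lia; destruct nu as [|[|[|[|]]]]; try lia; part1 l c.
  - intros i Hi. destruct i as [|[|[|[|]]]]; try lia;
    destruct mu as [|[|[|[|]]]]; try lia; destruct nu as [|[|[|[|]]]]; try lia; part1 l c.
Qed.



Ltac cbvL := cbv beta iota delta [dLdv dLdq dLdn Lag upd Nat.eqb].

Lemma dLdv0 l m nv q v : nv <> 0 -> dLdv l m nv q v 0 = - v 0%nat / nv.
Proof. intros; cbvL; apply is_derive_unique; auto_derive; auto; field; auto. Qed.
Lemma dLdvi l m nv q v i : (1 <= i <= 3)%nat -> nv <> 0 ->
  dLdv l m nv q v i = exp (l * q 0%nat) * v i / nv.
Proof. intros Hi Hn; destruct i as [|[|[|[|]]]]; try lia; cbvL;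
  apply is_derive_unique; auto_derive; auto; field; auto. Qed.
Lemma dLdq0 l m nv q v : nv <> 0 -> dLdq l m nv q v 0 =
   / (2 * nv) * (l * exp (l * q 0%nat) * ((v 1%nat) ^ 2 + (v 2%nat) ^ 2 + (v 3%nat) ^ 2)).
Proof. intros; cbvL; apply is_derive_unique; auto_derive; auto; field; auto. Qed.
Lemma dLdqi l m nv q v i : (1 <= i <= 3)%nat -> dLdq l m nv q v i = 0.
Proof. intros Hi; destruct i as [|[|[|[|]]]]; try lia; cbvL; apply Derive_const. Qed.
Lemma dLdn_val l m nv q v : 0 < nv -> dLdn l m nv q v =
  - (- (v 0%nat) ^ 2 + exp (l * q 0%nat) * ((v 1%nat) ^ 2 + (v 2%nat) ^ 2 + (v 3%nat) ^ 2)) / (2 * nv^2) - m^2/2.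
Proof. intros; cbvL; apply is_derive_unique; auto_derive. lra. field; lra. Qed.

Lemma kappa_val l m n q lam : kappa l m n q lam =
  (mom l m n q 1 lam)^2 + (mom l m n q 2 lam)^2 + (mom l m n q 3 lam)^2.
Proof.
  unfold kappa. cbv beta iota delta [sum4 Kup ginv Kt spatial_diag Nat.eqb Nat.leb andb].
  set (T := q lam 0%nat).
  assert (H : exp (- (l * T)) * exp (- (l * T)) * exp (2 * l * T) = 1).
  { rewrite <- !exp_plus. replace (- (l * T) + - (l * T) + 2 * l * T) with 0 by ring. apply exp_0. }
  set (e := exp (- (l * T))) in *. set (f := exp (2 * l * T)) in *.
  set (a := mom l m n q 1 lam). set (b := mom l m n q 2 lam). set (d := mom l m n q 3 lam).
  transitivity ((e*e*f) * (a^2+b^2+d^2)); [ring|]. rewrite H; ring.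
Qed.

Lemma const_on (a b : Rbar) (f : R -> R) :
  (forall x, in_interval a b x -> is_derive f x 0) ->
  forall x y, in_interval a b x -> in_interval a b y -> f x = f y.
Proof.
  intros Hd x y [Hax Hxb] [Hay Hyb].
  assert (Hin : forall z, Rmin x y <= z <= Rmax x y -> in_interval a b z).
  { intros z [H1 H2]. split.
    - apply Rbar_lt_le_trans with (Finite (Rmin x y)).
      + unfold Rmin; destruct Rle_dec; auto.
      + simpl; auto.
    - apply Rbar_le_lt_trans with (Finite (Rmax x y)).
      + simpl; auto.
      + unfold Rmax; destruct Rle_dec; auto. }
  destruct (MVT_gen f x y (fun _ => 0)) as [z [_ Hz]].
  - intros z Hz. apply Hd, Hin. lra.
  - intros z Hz. apply continuity_pt_filterlim.
    exact (@ex_derive_continuous R_AbsRing R_NormedModule f z (ex_intro _ 0 (Hd z (Hin z Hz)))).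
  - lra.
Qed.


Lemma isd_mult f g x df dg : is_derive f x df -> is_derive g x dg -> is_derive (fun t => f t * g t) x (df * g x + f x * dg).
Proof. intros; apply (is_derive_mult f g); auto. intros; apply Rmult_comm. Qed.
Lemma isd_plus f g x df dg : is_derive f x df -> is_derive g x dg -> is_derive (fun t => f t + g t) x (df + dg).
Proof. intros; apply (is_derive_plus f g); auto. Qed.
Lemma isd_comp f g x df dg : is_derive f (g x) df -> is_derive g x dg -> is_derive (fun t => f (g t)) x (dg * df).
Proof. intros; apply (is_derive_comp f g); auto. Qed.
Lemma isd_scal f x k df : is_derive f x df -> is_derive (fun t => k * f t) x (k * df).
Proof. intros; apply (is_derive_scal f); auto. Qed.
Lemma part2 l : l <> 0 -> is_proper_CKV (Ups0 l 0) (gdS l)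
      /\ forall i : nat, (1 <= i <= 3)%nat -> is_proper_CKV (Upsi l 0 i) (gdS l).
Proof.
  intros Hl.
  assert (HO : forall t, Omega0 l 0 t = l/2 * exp (l*t/2)).
  { intros t; unfold Omega0. rewrite Rmult_0_l, Rplus_0_r, sqrt_1. field. }
  assert (He : exp 1 <> 1).
  { pose proof (exp_ineq1 1 ltac:(lra)). lra. }
  split.
  - exists (fun p => Omega0 l 0 (p 0%nat)). split.
    + intros p mu nu Hmu Hnu. destruct (part1 l Hl 0 (Rle_refl 0) p mu nu Hmu Hnu) as [H _].
      rewrite H; ring.
    + exists (fun _ => 0), (fun _ => 2/l). rewrite !HO.
      replace (l * 0 / 2) with 0 by field. replace (l * (2/l) / 2) with 1 by (field; auto).
      rewrite exp_0. intro H. apply He. apply (Rmult_eq_reg_l (l/2)); [|apply Rmult_integral_contrapositive; split; auto; lra].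
      lra.
  - intros i Hi. exists (fun p => p i * Omega0 l 0 (p 0%nat)). split.
    + intros p mu nu Hmu Hnu. destruct (part1 l Hl 0 (Rle_refl 0) p mu nu Hmu Hnu) as [_ H].
      rewrite H; auto; ring.
    + exists (fun _ => 0), (fun _ => 1). rewrite !HO. intro H.
      pose proof (exp_pos (l*1/2)).
      assert (l/2 * exp (l*1/2) = 0) by lra.
      apply Rmult_integral in H1; destruct H1; [lra|lra].
Qed.



Lemma isd_ext (f g : R -> R) x d : (forall t, f t = g t) -> is_derive f x d -> is_derive g x d.
Proof. intros; apply (is_derive_ext f g); auto. Qed.
Lemma isd_eqv (f : R -> R) x d1 d2 : is_derive f x d1 -> d1 = d2 -> is_derive f x d2.
Proof. intros; subst; auto. Qed.

Lemma part3 l : l <> 0 -> (forall (m : R) (a b : Rbar) (n : R -> R) (q : R -> pt) (lam0 : R),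
        is_EL_solution l m (in_interval a b) n q ->
        in_interval a b lam0 ->
        kappa l m n q lam0 <> 0 ->
        let c := m ^ 2 / kappa l m n q lam0 in
        forall lam1 lam2 : R, in_interval a b lam1 -> in_interval a b lam2 ->
          contr (Ups0 l c) l m n q lam1 = contr (Ups0 l c) l m n q lam2
          /\ forall i : nat, (1 <= i <= 3)%nat ->
               contr (Upsi l c i) l m n q lam1 = contr (Upsi l c i) l m n q lam2).
Proof.
  intros Hl m a b n q lam0 Hsol H0 Hk c lam1 lam2 H1 H2.
  assert (Hpi : forall i, (1 <= i <= 3)%nat -> forall x, in_interval a b x ->
            mom l m n q i x = mom l m n q i lam0).
  { intros i Hi x Hx. apply (const_on a b); auto. intros y Hy.
    destruct (Hsol y Hy) as (_ & _ & Hd & _). specialize (Hd i ltac:(lia)).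
    rewrite dLdqi in Hd; auto. }
  assert (Hkap : forall x, in_interval a b x -> kappa l m n q x = kappa l m n q lam0).
  { intros x Hx. rewrite !kappa_val. rewrite !(Hpi 1%nat), !(Hpi 2%nat), !(Hpi 3%nat); auto; lia. }
  assert (Hc : 0 <= c).
  { unfold c. rewrite kappa_val in *. unfold Rdiv. apply Rmult_le_pos.
    - apply pow2_ge_0.
    - left; apply Rinv_0_lt_compat.
      pose proof (pow2_ge_0 (mom l m n q 1 lam0)); pose proof (pow2_ge_0 (mom l m n q 2 lam0));
      pose proof (pow2_ge_0 (mom l m n q 3 lam0)). destruct (Rle_lt_or_eq_dec 0 _ (Rplus_le_le_0_compat _ _ (Rplus_le_le_0_compat _ _ H H3) H4)); auto.
      exfalso; apply Hk; auto. }
  assert (Hpt : forall x, in_interval a b x ->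
     let n0 := n x in let T := q x 0%nat in let E := exp (l * T) in
     let v := fun k => vel q k x in
     let Sv := v 1%nat ^ 2 + v 2%nat ^ 2 + v 3%nat ^ 2 in
     0 < n0 /\ mom l m n q 0 x = - v 0%nat / n0
     /\ (forall i, (1 <= i <= 3)%nat -> mom l m n q i x = E * v i / n0)
     /\ is_derive (mom l m n q 0) x (/ (2 * n0) * (l * E * Sv))
     /\ (forall i, (1 <= i <= 3)%nat -> is_derive (mom l m n q i) x 0)
     /\ (forall k, (k <= 3)%nat -> is_derive (fun s => q s k) x (v k))
     /\ v 0%nat ^ 2 = (1 + c * E) * E * Sv).
  { intros x Hx n0 T E v Sv.
    destruct (Hsol x Hx) as (Hn & Hex & Hd & Hcon).
    assert (Hn0 : n0 <> 0) by (unfold n0; lra).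
    assert (Hm0 : mom l m n q 0 x = - v 0%nat / n0) by (unfold mom; rewrite dLdv0; auto).
    assert (Hmi : forall i, (1 <= i <= 3)%nat -> mom l m n q i x = E * v i / n0)
      by (intros; unfold mom; rewrite dLdvi; auto).
    split; [auto|]. split; [auto|]. split; [auto|]. split.
    { specialize (Hd 0%nat ltac:(lia)). rewrite dLdq0 in Hd; auto. }
    split.
    { intros i Hi. specialize (Hd i ltac:(lia)). rewrite dLdqi in Hd; auto. }
    split.
    { intros k Hk'. apply Derive_correct. apply Hex; auto. }
    rewrite dLdn_val in Hcon; auto. fold n0 T E in Hcon. change (fun k => vel q k x) with v in Hcon.
    fold Sv in Hcon.
    assert (HK : c * kappa l m n q x = m ^ 2).
    { rewrite Hkap; auto. unfold c. field; auto. }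
    rewrite kappa_val, !Hmi in HK by lia.
    assert (A1 : v 0%nat ^ 2 - E * Sv - m^2 * n0^2 = 0).
    { rewrite <- (Rmult_0_r (2*n0^2)), <- Hcon. unfold Sv, v; cbv beta; field; auto. }
    assert (A2 : c * (E^2 * Sv) - m^2 * n0^2 = 0).
    { rewrite <- (Rmult_0_r (n0^2)), <- (Rminus_diag_eq _ _ HK). unfold Sv, v; cbv beta; field; auto. }
    nra. }
  split.
  - apply (const_on a b (fun x => contr (Ups0 l c) l m n q x)); auto. intros x Hx.
    pose proof (Hpt x Hx) as HP; cbv zeta beta in HP.
    destruct HP as (Hn & Hm0 & Hmi & Hd0 & Hdi & Hq & Hv).
    apply (isd_ext (fun s => phi l c (q s 0%nat) * mom l m n q 0 s)).
    { intro t. cbv beta iota delta [contr sum4 Ups0 Nat.eqb]; ring. }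
    pose proof (isd_mult _ _ x _ _ (isd_comp (phi l c) (fun s => q s 0%nat) x _ _
       (Dphi l c (q x 0%nat) Hc) (Hq 0%nat ltac:(lia))) Hd0) as HD.
    apply (isd_eqv _ _ _ _ HD). cbv beta. rewrite Hm0, Omega0_alt by auto.
    set (E := exp (l * q x 0%nat)) in *.
    assert (HE : 0 < E) by apply exp_pos.
    assert (H1c : 0 < 1 + c * E) by (unfold E; apply pos1; auto).
    assert (H2c : E + c * (E * E) <> 0) by (apply Rgt_not_eq; nra).
    set (S := vel q 1 x ^ 2 + vel q 2 x ^ 2 + vel q 3 x ^ 2) in *.
    match goal with |- ?u = ?w => change (@eq R u w) end.
    transitivity (l * phi l c (q x 0%nat) / (2 * n x * (1 + c*E)) * (-(vel q 0 x ^ 2) + (1 + c*E)*E*S)).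
    { field; repeat split; lra. }
    rewrite Hv; ring.
  - intros i Hi.
    apply (const_on a b (fun x => contr (Upsi l c i) l m n q x)); auto. intros x Hx.
    pose proof (Hpt x Hx) as HP; cbv zeta beta in HP.
    destruct HP as (Hn & Hm0 & Hmi & Hd0 & Hdi & Hq & Hv).
    apply (isd_ext (fun s => phi l c (q s 0%nat) * q s i * mom l m n q 0 s
                  + (-(2/l) * psi l c (q s 0%nat)) * mom l m n q i s)).
    { intro t. destruct i as [|[|[|[|]]]]; try lia;
      cbv beta iota delta [contr sum4 Upsi Nat.eqb]; ring. }
    pose proof (isd_plus _ _ x _ _
       (isd_mult _ _ x _ _
          (isd_mult _ _ x _ _ (isd_comp (phi l c) (fun s => q s 0%nat) x _ _
              (Dphi l c (q x 0%nat) Hc) (Hq 0%nat ltac:(lia))) (Hq i ltac:(lia))) Hd0)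
       (isd_mult _ _ x _ _
          (isd_scal _ x (-(2/l)) _ (isd_comp (psi l c) (fun s => q s 0%nat) x _ _
              (Dpsi l c (q x 0%nat) Hc) (Hq 0%nat ltac:(lia)))) (Hdi i Hi))) as HD.
    apply (isd_eqv _ _ _ _ HD). cbv beta. rewrite Hm0, Hmi, Omega0_alt, psi_val by auto.
    set (E := exp (l * q x 0%nat)) in *.
    assert (HE : 0 < E) by apply exp_pos.
    assert (H1c : 0 < 1 + c * E) by (unfold E; apply pos1; auto).
    assert (H2c : E + c * (E * E) <> 0) by (apply Rgt_not_eq; nra).
    set (S := vel q 1 x ^ 2 + vel q 2 x ^ 2 + vel q 3 x ^ 2) in *.
    match goal with |- ?u = ?w => change (@eq R u w) end.
    transitivity (q x i * (l * phi l c (q x 0%nat) / (2 * n x * (1 + c*E)) * (-(vel q 0 x ^ 2) + (1 + c*E)*E*S))).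
    { field; repeat split; lra. }
    rewrite Hv; ring.
Qed.


Theorem mainTheorem5 :
  forall l : R, l <> 0 ->
  (* Lie derivative identities *)
  (forall c : R, 0 <= c ->
     forall (p : pt) (mu nu : nat), (mu <= 3)%nat -> (nu <= 3)%nat ->
       lie (Ups0 l c) (gdS l) p mu nu
         = 2 * Omega0 l c (p 0%nat) * (gdS l p mu nu + c * Kt l p mu nu)
       /\ (forall i : nat, (1 <= i <= 3)%nat ->
            lie (Upsi l c i) (gdS l) p mu nu
              = 2 * p i * Omega0 l c (p 0%nat) * (gdS l p mu nu + c * Kt l p mu nu)))
  (* for c = 0: proper conformal Killing vectors *)
  /\ (is_proper_CKV (Ups0 l 0) (gdS l)
      /\ forall i : nat, (1 <= i <= 3)%nat -> is_proper_CKV (Upsi l 0 i) (gdS l))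
  (* conserved quantities along Euler-Lagrange solutions with kappa <> 0 *)
  /\ (forall (m : R) (a b : Rbar) (n : R -> R) (q : R -> pt) (lam0 : R),
        is_EL_solution l m (in_interval a b) n q ->
        in_interval a b lam0 ->
        kappa l m n q lam0 <> 0 ->
        let c := m ^ 2 / kappa l m n q lam0 in
        forall lam1 lam2 : R, in_interval a b lam1 -> in_interval a b lam2 ->
          contr (Ups0 l c) l m n q lam1 = contr (Ups0 l c) l m n q lam2
          /\ forall i : nat, (1 <= i <= 3)%nat ->
               contr (Upsi l c i) l m n q lam1 = contr (Upsi l c i) l m n q lam2).

Proof.
  intros l Hl. split; [|split].
  - intros c Hc p mu nu Hmu Hnu. apply part1; auto.
  - apply part2; auto.
  - apply part3; auto.
Qed.
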